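(* Let $P$ be a convex polygon. (1) Every locally maximal parallelogram in $P$ is inscribed. (2) For any inscribed slidable parallelogram in $P$, there is an inscribed non-slidable parallelogram in $P$ with the same area.
   Context: $P$ is regarded as a compact set (boundary $\partial P$ plus interior); its edges are regarded as open segments (not containing their endpoints). A parallelogram lies in $P$ if all four corners lie in $P$. A parallelogram $A_0A_1A_2A_3$ lying in $P$ is locally maximal if there exists $\delta>0$ such that every parallelogram $B_0B_1B_2B_3$ lying in $P$ with $|A_iB_i|<\delta$ for all $i$ has area at most that of $A_0A_1A_2A_3$. A parallelogram is inscribed if all its corners lie on $\partial P$. It is slidable if two of its corners lie in the same (open) edge of $P$ (a corner in the interior of an edge and a corner at an endpoint of that edge do not count as lying in the same edge), and non-slidable otherwise. *)

(* Defs.v *)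
From Stdlib Require Import Reals Lra Arith.
Open Scope R_scope.

Definition point := (R * R)%type.

Definition psub (p q : point) : point := (fst p - fst q, snd p - snd q).
Definition padd (p q : point) : point := (fst p + fst q, snd p + snd q).
Definition pscale (t : R) (p : point) : point := (t * fst p, t * snd p).
Definition cross (a b : point) : R := fst a * snd b - snd a * fst b.
Definition dist2 (p q : point) : R :=
  sqrt ((fst p - fst q) ^ 2 + (snd p - snd q) ^ 2).

(* A polygon with n vertices v 0, ..., v (n-1), indices taken modulo n. *)
Definition nxt (n i : nat) : nat := (S i mod n)%nat.

(* Convex polygon: n >= 3 vertices listed counterclockwise, and for every
   edge [v i, v (i+1)] all other vertices lie strictly to its left
   (strict convexity: no three vertices collinear, no straight angles). *)
Definition convex_polygon (n : nat) (v : nat -> point) : Prop :=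
  (3 <= n)%nat /\
  forall i j, (i < n)%nat -> (j < n)%nat -> j <> i -> j <> nxt n i ->
    0 < cross (psub (v (nxt n i)) (v i)) (psub (v j) (v i)).

(* P as a compact set: boundary plus interior (intersection of the closed
   left half-planes of its edges = convex hull of the vertices). *)
Definition inP (n : nat) (v : nat -> point) (x : point) : Prop :=
  forall i, (i < n)%nat -> 0 <= cross (psub (v (nxt n i)) (v i)) (psub x (v i)).

Definition in_edge (n : nat) (v : nat -> point) (i : nat) (x : point) : Prop :=
  exists t, 0 < t < 1 /\ x = padd (v i) (pscale t (psub (v (nxt n i)) (v i))).

Definition on_boundary (n : nat) (v : nat -> point) (x : point) : Prop :=
  (exists i, (i < n)%nat /\ x = v i) \/ (exists i, (i < n)%nat /\ in_edge n v i x).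

(* A parallelogram A 0 A 1 A 2 A 3 (corners A 0 .. A 3 in cyclic order). *)
Definition par_area (A : nat -> point) : R :=
  Rabs (cross (psub (A 1%nat) (A 0%nat)) (psub (A 3%nat) (A 0%nat))).

Definition parallelogram (A : nat -> point) : Prop :=
  padd (A 0%nat) (A 2%nat) = padd (A 1%nat) (A 3%nat) /\ 0 < par_area A.

Definition lies_in (n : nat) (v : nat -> point) (A : nat -> point) : Prop :=
  forall k, (k < 4)%nat -> inP n v (A k).

Definition locally_maximal (n : nat) (v : nat -> point) (A : nat -> point) : Prop :=
  parallelogram A /\ lies_in n v A /\
  exists delta, 0 < delta /\
    forall B, parallelogram B -> lies_in n v B ->
      (forall k, (k < 4)%nat -> dist2 (A k) (B k) < delta) ->
      par_area B <= par_area A.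

Definition inscribed (n : nat) (v : nat -> point) (A : nat -> point) : Prop :=
  forall k, (k < 4)%nat -> on_boundary n v (A k).

Definition slidable (n : nat) (v : nat -> point) (A : nat -> point) : Prop :=
  exists i j k, (i < n)%nat /\ (j < 4)%nat /\ (k < 4)%nat /\ j <> k /\
    in_edge n v i (A j) /\ in_edge n v i (A k).

(* Main.v *)
Require Import Defs.
From Stdlib Require Import Reals Lra Lia Arith Classical.
Open Scope R_scope.

Lemma pt_eq (x y : point) : fst x = fst y -> snd x = snd y -> x = y.
Proof. destruct x, y; simpl; intros; subst; reflexivity. Qed.

Definition cl (n:nat) (v:nat->point) (i:nat) (x:point) : R :=
  cross (psub (v (nxt n i)) (v i)) (psub x (v i)).

Lemma nxt_val n i : (i < n)%nat -> nxt n i = if Nat.eqb (S i) n then 0%nat else S i.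
Proof.
  intros H. unfold nxt. destruct (Nat.eqb_spec (S i) n).
  - subst. apply Nat.mod_same. lia.
  - apply Nat.mod_small. lia.
Qed.

Lemma nxt_lt n i : (i < n)%nat -> (nxt n i < n)%nat.
Proof. intros H. rewrite nxt_val by lia. destruct (Nat.eqb_spec (S i) n); lia. Qed.

Lemma nxt_ne n i : (3 <= n)%nat -> (i < n)%nat -> nxt n i <> i.
Proof. intros H3 H. rewrite nxt_val by lia. destruct (Nat.eqb_spec (S i) n); lia. Qed.

Lemma nxt2_ne n i : (3 <= n)%nat -> (i < n)%nat -> nxt n (nxt n i) <> i.
Proof.
  intros H3 H. rewrite (nxt_val n i) by lia.
  destruct (Nat.eqb_spec (S i) n);
  match goal with |- nxt n ?k <> _ => rewrite (nxt_val n k) by lia end;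
  match goal with |- context [Nat.eqb ?a n] => destruct (Nat.eqb_spec a n) end; lia.
Qed.

Definition prv (n i : nat) : nat := if Nat.eqb i 0 then (n-1)%nat else (i-1)%nat.

Lemma prv_lt n i : (3 <= n)%nat -> (i < n)%nat -> (prv n i < n)%nat.
Proof. intros. unfold prv. destruct (Nat.eqb_spec i 0); lia. Qed.

Lemma nxt_prv n i : (3 <= n)%nat -> (i < n)%nat -> nxt n (prv n i) = i.
Proof.
  intros. rewrite nxt_val by (apply prv_lt; auto). unfold prv.
  destruct (Nat.eqb_spec i 0);
  match goal with |- context [Nat.eqb ?a n] => destruct (Nat.eqb_spec a n) end; lia.
Qed.

Lemma prv_ne n i : (3 <= n)%nat -> (i < n)%nat -> nxt n i <> prv n i.
Proof.
  intros. rewrite nxt_val by lia. unfold prv.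
  destruct (Nat.eqb_spec i 0); destruct (Nat.eqb_spec (S i) n); lia.
Qed.

Ltac zero_tac := match goal with |- 0 <= ?e => replace e with 0 by ring; lra end.

Lemma cvx_pos n v i j : convex_polygon n v -> (i<n)%nat -> (j<n)%nat -> j<>i ->
  j<> nxt n i -> 0 < cl n v i (v j).
Proof. intros [_ H]; unfold cl; apply H. Qed.

Lemma vert_in n v k : convex_polygon n v -> (k<n)%nat -> inP n v (v k).
Proof.
  intros hP Hk i Hi. destruct (Nat.eq_dec k i) as [->|Hki].
  - unfold cross, psub; simpl. zero_tac.
  - destruct (Nat.eq_dec k (nxt n i)) as [->|Hkn].
    + unfold cross, psub; simpl. zero_tac.
    + left. apply (cvx_pos n v i k hP Hi Hk Hki Hkn).
Qed.

Lemma cl_comb n v i x y t :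
  cl n v i (padd x (pscale t (psub y x))) = (1 - t) * cl n v i x + t * cl n v i y.
Proof. unfold cl, cross, padd, pscale, psub; simpl. ring. Qed.

Lemma inP_convex n v x y t : inP n v x -> inP n v y -> 0 <= t <= 1 ->
  inP n v (padd x (pscale t (psub y x))).
Proof.
  intros Hx Hy Ht i Hi. pose proof (cl_comb n v i x y t) as E. unfold cl in E.
  rewrite E. specialize (Hx i Hi). specialize (Hy i Hi).
  apply Rplus_le_le_0_compat; apply Rmult_le_pos; lra.
Qed.

Lemma edge_in n v i x : convex_polygon n v -> (i<n)%nat -> in_edge n v i x -> inP n v x.
Proof.
  intros hP Hi [t [Ht ->]]. apply inP_convex; try lra.
  apply vert_in; auto. apply vert_in; auto. apply nxt_lt; auto.
Qed.

Lemma edge_nz n v i : convex_polygon n v -> (i<n)%nat ->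
  ~ (fst (v (nxt n i)) - fst (v i) = 0 /\ snd (v (nxt n i)) - snd (v i) = 0).
Proof.
  intros hP Hi [E1 E2]. pose proof hP as [H3 _].
  assert (Hl : (nxt n (nxt n i) < n)%nat) by (apply nxt_lt, nxt_lt; auto).
  pose proof (cvx_pos n v i _ hP Hi Hl (nxt2_ne n i H3 Hi)
      (nxt_ne n (nxt n i) H3 (nxt_lt n i Hi))) as P.
  unfold cl, cross, psub in P; simpl in P. rewrite E1, E2 in P. lra.
Qed.

Lemma par_lemma ex ey ax ay bx by' : ~ (ex = 0 /\ ey = 0) ->
  ex * ay - ey * ax = 0 -> ex * by' - ey * bx = 0 -> ax * by' - ay * bx = 0.
Proof.
  intros Hn H1 H2.
  assert (E1 : ex * (ax * by' - ay * bx) = ax * (ex * by' - ey * bx) - bx * (ex * ay - ey * ax)) by ring.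
  assert (E2 : ey * (ax * by' - ay * bx) = ay * (ex * by' - ey * bx) - by' * (ex * ay - ey * ax)) by ring.
  rewrite H1, H2 in E1, E2.
  destruct (Req_dec ex 0) as [Hx|Hx].
  - assert (ey <> 0) by tauto.
    apply (Rmult_eq_reg_l ey); [lra|auto].
  - apply (Rmult_eq_reg_l ex); [lra|auto].
Qed.

Lemma in_edge_line n v i x : in_edge n v i x -> cl n v i x = 0.
Proof. intros [t [_ ->]]. unfold cl, cross, padd, pscale, psub; simpl. ring. Qed.

Lemma vert_not_edge n v k i : convex_polygon n v -> (k<n)%nat -> (i<n)%nat ->
  in_edge n v i (v k) -> False.
Proof.
  intros hP Hk Hi He. pose proof (edge_nz n v i hP Hi) as Hnz.
  destruct (Nat.eq_dec k i) as [->|Hki].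
  - destruct He as [t [Ht E]].
    apply Hnz. pose proof (f_equal fst E) as Ex. pose proof (f_equal snd E) as Ey.
    simpl in Ex, Ey. split.
    + apply (Rmult_eq_reg_l t); lra.
    + apply (Rmult_eq_reg_l t); lra.
  - destruct (Nat.eq_dec k (nxt n i)) as [->|Hkn].
    + destruct He as [t [Ht E]].
      apply Hnz. pose proof (f_equal fst E) as Ex. pose proof (f_equal snd E) as Ey.
      simpl in Ex, Ey. split.
      * apply (Rmult_eq_reg_l (1-t)); lra.
      * apply (Rmult_eq_reg_l (1-t)); lra.
    + pose proof (cvx_pos n v i k hP Hi Hk Hki Hkn). apply in_edge_line in He. lra.
Qed.

Lemma edge_disj n v i j x : convex_polygon n v -> (i<n)%nat -> (j<n)%nat ->
  in_edge n v i x -> in_edge n v j x -> i = j.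
Proof.
  intros hP Hi Hj Hei Hej. destruct (Nat.eq_dec i j) as [|Hij]; auto. exfalso.
  pose proof hP as [H3 _].
  apply in_edge_line in Hei. destruct Hej as [t [Ht ->]].
  rewrite cl_comb in Hei.
  assert (A1 := vert_in n v j hP Hj i Hi).
  assert (A2 := vert_in n v (nxt n j) hP (nxt_lt n j Hj) i Hi).
  fold (cl n v i (v j)) in A1. fold (cl n v i (v (nxt n j))) in A2.
  destruct (Nat.eq_dec j (nxt n i)) as [->|Hjn].
  - assert (0 < cl n v i (v (nxt n (nxt n i)))).
    { assert (L1 := nxt_lt n i Hi). assert (L2 := nxt_lt n _ L1).
      apply cvx_pos; auto. apply nxt2_ne; auto. apply nxt_ne; auto. }
    nra.
  - assert (0 < cl n v i (v j)) by (apply cvx_pos; auto).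
    nra.
Qed.

Lemma interior n v x i : convex_polygon n v -> inP n v x -> ~ on_boundary n v x ->
  (i < n)%nat -> 0 < cl n v i x.
Proof.
  intros hP Hx Hnb Hi. pose proof hP as [H3 _].
  destruct (Rle_lt_or_eq_dec 0 (cl n v i x) (Hx i Hi)) as [|E]; auto. exfalso. apply Hnb.
  pose proof (edge_nz n v i hP Hi) as Hnz.
  set (i' := nxt n i) in *.
  assert (Hi' : (i' < n)%nat) by (apply nxt_lt; auto).
  set (ex := fst (v i') - fst (v i)) in *. set (ey := snd (v i') - snd (v i)) in *.
  set (dx := fst x - fst (v i)). set (dy := snd x - snd (v i)).
  set (D := ex*ex + ey*ey).
  assert (HD : D <> 0) by (unfold D; intro; apply Hnz; split; nra).
  assert (E' : ex * dy - ey * dx = 0).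
  { unfold cl, cross, psub in E; simpl in E. unfold ex, ey, dx, dy, i'. lra. }
  set (t := (dx*ex + dy*ey) / D).
  assert (Ht : t * D = dx*ex + dy*ey) by (unfold t; field; exact HD).
  assert (Xx : fst x = fst (v i) + t * ex).
  { assert (dx = t * ex); [|unfold dx in *; lra].
    apply (Rmult_eq_reg_r D); [|exact HD].
    replace (t * ex * D) with (ex * (t * D)) by ring. rewrite Ht.
    assert (dx * D - ex * (dx * ex + dy * ey) = - ey * (ex * dy - ey * dx)) by (unfold D; ring).
    rewrite E' in H. lra. }
  assert (Xy : snd x = snd (v i) + t * ey).
  { assert (dy = t * ey); [|unfold dy in *; lra].
    apply (Rmult_eq_reg_r D); [|exact HD].
    replace (t * ey * D) with (ey * (t * D)) by ring. rewrite Ht.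
    assert (dy * D - ey * (dx * ex + dy * ey) = ex * (ex * dy - ey * dx)) by (unfold D; ring).
    rewrite E' in H. lra. }
  assert (Hi'' : (nxt n i' < n)%nat) by (apply nxt_lt; auto).
  assert (K : 0 < cl n v i (v (nxt n i'))).
  { apply cvx_pos; auto. apply nxt2_ne; auto. apply nxt_ne; auto. }
  assert (C1 : cl n v i' x = (1 - t) * cl n v i (v (nxt n i'))).
  { unfold cl, cross, psub; simpl. fold i'. rewrite Xx, Xy. unfold ex, ey. ring. }
  assert (Hx1 := Hx i' Hi'). fold (cl n v i' x) in Hx1.
  assert (T1 : t <= 1) by nra.
  set (p := prv n i).
  assert (Hp : (p < n)%nat) by (apply prv_lt; auto).
  assert (Np : nxt n p = i) by (apply nxt_prv; auto).
  assert (K' : 0 < cl n v p (v i')).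
  { apply cvx_pos; auto. apply prv_ne; auto. rewrite Np. apply nxt_ne; auto. }
  assert (C2 : cl n v p x = t * cl n v p (v i')).
  { unfold cl, cross, psub; rewrite Np; simpl. rewrite Xx, Xy. unfold ex, ey. ring. }
  assert (Hx2 := Hx p Hp). fold (cl n v p x) in Hx2.
  assert (T0 : 0 <= t) by nra.
  destruct (Req_dec t 0) as [Z|Z].
  - left. exists i. split; auto. apply pt_eq; [rewrite Xx|rewrite Xy]; rewrite Z; ring.
  - destruct (Req_dec t 1) as [O|O].
    + left. exists i'. split; auto. apply pt_eq; [rewrite Xx|rewrite Xy]; rewrite O; unfold ex, ey; ring.
    + right. exists i. split; auto. exists t. split; [lra|].
      apply pt_eq; simpl; [rewrite Xx|rewrite Xy]; unfold ex, ey; fold i'; ring.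
Qed.

Lemma small_step (n : nat) (a b : nat -> R) :
  (forall i, (i < n)%nat -> 0 < a i) ->
  exists t0, 0 < t0 /\ forall i t, (i < n)%nat -> 0 <= t <= t0 -> 0 < a i + t * b i.
Proof.
  induction n as [|n IH]; intros Ha.
  - exists 1. split; [lra|]. intros; lia.
  - destruct IH as [t0 [Ht0 H]]. { intros; apply Ha; lia. }
    assert (Han : 0 < a n) by (apply Ha; lia).
    destruct (Rle_dec 0 (b n)) as [Hb|Hb].
    + exists t0. split; auto. intros i t Hi Ht.
      destruct (Nat.eq_dec i n) as [->|]. nra. apply H; auto; lia.
    + set (t1 := a n / (- b n) / 2).
      assert (Ht1 : t1 * b n = - a n / 2) by (unfold t1; field; lra).
      assert (Pt1 : 0 < t1) by (unfold t1; apply Rmult_lt_0_compat; [apply Rdiv_lt_0_compat|]; lra).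
      exists (Rmin t0 t1). split. apply Rmin_pos; auto.
      intros i t Hi Ht. pose proof (Rmin_l t0 t1). pose proof (Rmin_r t0 t1).
      destruct (Nat.eq_dec i n) as [->|].
      * assert (t * b n >= t1 * b n) by nra. lra.
      * apply H; [lia|lra].
Qed.

Lemma interior_dir n v x (q : point) : (forall i, (i < n)%nat -> 0 < cl n v i x) ->
  exists t0, 0 < t0 /\ forall t, 0 <= t <= t0 -> inP n v (padd x (pscale t q)).
Proof.
  intros H.
  destruct (small_step n (fun i => cl n v i x)
     (fun i => cross (psub (v (nxt n i)) (v i)) q) H) as [t0 [Ht0 Hs]].
  exists t0. split; auto. intros t Ht i Hi. specialize (Hs i t Hi Ht).
  simpl in Hs. unfold cl, cross, psub, padd, pscale in *; simpl in *. nra.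
Qed.

Definition rot (A : nat -> point) : nat -> point :=
  fun k => match k with 0%nat => A 1%nat | 1%nat => A 2%nat | 2%nat => A 3%nat | _ => A 0%nat end.
Definition unrot (A : nat -> point) : nat -> point :=
  fun k => match k with 0%nat => A 3%nat | 1%nat => A 0%nat | 2%nat => A 1%nat | _ => A 2%nat end.

Ltac par_split H :=
  let Hx := fresh "Hx" in let Hy := fresh "Hy" in
  pose proof (f_equal fst H) as Hx; pose proof (f_equal snd H) as Hy;
  unfold padd in Hx, Hy; simpl in Hx, Hy.

Lemma area_eq_rot (A : nat -> point) : padd (A 0%nat) (A 2%nat) = padd (A 1%nat) (A 3%nat) ->
  par_area (rot A) = par_area A.
Proof.
  intros H. par_split H. unfold par_area, rot, cross, psub; simpl. f_equal.
  assert (E1 : fst (A 2%nat) = fst (A 1%nat) + fst (A 3%nat) - fst (A 0%nat)) by lra.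
  assert (E2 : snd (A 2%nat) = snd (A 1%nat) + snd (A 3%nat) - snd (A 0%nat)) by lra.
  rewrite E1, E2. ring.
Qed.

Lemma area_eq_unrot (A : nat -> point) : padd (A 0%nat) (A 2%nat) = padd (A 1%nat) (A 3%nat) ->
  par_area (unrot A) = par_area A.
Proof.
  intros H. par_split H. unfold par_area, unrot, cross, psub; simpl. f_equal.
  assert (E1 : fst (A 2%nat) = fst (A 1%nat) + fst (A 3%nat) - fst (A 0%nat)) by lra.
  assert (E2 : snd (A 2%nat) = snd (A 1%nat) + snd (A 3%nat) - snd (A 0%nat)) by lra.
  rewrite E1, E2. ring.
Qed.

Lemma par_rot A : parallelogram A -> parallelogram (rot A).
Proof.
  intros [H Ha]. split.
  - par_split H. unfold rot; apply pt_eq; unfold padd; simpl; lra.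
  - rewrite area_eq_rot; auto.
Qed.

Lemma par_unrot A : parallelogram A -> parallelogram (unrot A).
Proof.
  intros [H Ha]. split.
  - par_split H. unfold unrot; apply pt_eq; unfold padd; simpl; lra.
  - rewrite area_eq_unrot; auto.
Qed.

Lemma lies_rot n v A : lies_in n v A -> lies_in n v (rot A).
Proof. intros H k Hk. destruct k as [|[|[|[|k]]]]; simpl; apply H; lia. Qed.
Lemma lies_unrot n v A : lies_in n v A -> lies_in n v (unrot A).
Proof. intros H k Hk. destruct k as [|[|[|[|k]]]]; simpl; apply H; lia. Qed.
Lemma insc_rot n v A : inscribed n v A -> inscribed n v (rot A).
Proof. intros H k Hk. destruct k as [|[|[|[|k]]]]; simpl; apply H; lia. Qed.

Definition Good n v (A : nat -> point) (delta : R) : Prop :=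
  exists B, parallelogram B /\ lies_in n v B /\
    (forall k, (k < 4)%nat -> dist2 (A k) (B k) < delta) /\ par_area A < par_area B.

Lemma Good_rot n v A delta : parallelogram A -> Good n v (rot A) delta -> Good n v A delta.
Proof.
  intros HA [B [HB [HL [Hd Ha]]]]. exists (unrot B). split; [|split; [|split]].
  - apply par_unrot; auto.
  - apply lies_unrot; auto.
  - intros k Hk. destruct k as [|[|[|[|k]]]]; simpl.
    + apply (Hd 3%nat); lia.
    + apply (Hd 0%nat); lia.
    + apply (Hd 1%nat); lia.
    + apply (Hd 2%nat); lia.
    + lia.
  - destruct HA as [HA _]. destruct HB as [HB _].
    rewrite area_eq_unrot by auto. rewrite <- (area_eq_rot A) by auto. auto.
Qed.

Lemma dist_self x : dist2 x x = 0.
Proof. unfold dist2. replace ((fst x - fst x) ^ 2 + (snd x - snd x) ^ 2) with 0 by ring. apply sqrt_0. Qed.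

Lemma dist_small x d delta : 0 < delta -> Rabs (fst d) + Rabs (snd d) < delta ->
  dist2 x (padd x d) < delta.
Proof.
  intros Hd H. unfold dist2, padd; cbn [fst snd].
  replace ((fst x - (fst x + fst d)) ^ 2 + (snd x - (snd x + snd d)) ^ 2)
    with (fst d ^ 2 + snd d ^ 2) by ring.
  rewrite <- (sqrt_pow2 delta) by lra. apply sqrt_lt_1_alt. split. nra.
  rewrite <- (pow2_abs (fst d)), <- (pow2_abs (snd d)).
  pose proof (Rabs_pos (fst d)). pose proof (Rabs_pos (snd d)). nra.
Qed.

Lemma core1 n v A delta : convex_polygon n v -> parallelogram A -> lies_in n v A ->
  (forall i, (i < n)%nat -> 0 < cl n v i (A 0%nat)) -> 0 < delta -> Good n v A delta.
Proof.
  intros hP [HA Harea] HL Hint Hd.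
  set (w := psub (A 3%nat) (A 0%nat)).
  destruct (interior_dir n v (A 0%nat) (pscale (-1) w) Hint) as [e0 [He0 Hp]].
  set (p := padd (A 0%nat) (pscale e0 (pscale (-1) w))).
  assert (Hpin : inP n v p) by (apply Hp; lra).
  set (q := psub p (A 1%nat)).
  destruct (interior_dir n v (A 0%nat) q Hint) as [t0 [Ht0 Hq]].
  set (M := Rabs (fst q) + Rabs (snd q) + 1).
  assert (HM : 0 < M) by (unfold M; pose proof (Rabs_pos (fst q)); pose proof (Rabs_pos (snd q)); lra).
  set (t := Rmin (Rmin t0 1) (delta / (2 * M))).
  assert (Ht1 : t <= Rmin t0 1) by apply Rmin_l.
  assert (Ht2 : t <= delta / (2 * M)) by apply Rmin_r.
  pose proof (Rmin_l t0 1). pose proof (Rmin_r t0 1).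
  assert (Htp : 0 < t).
  { apply Rmin_pos. apply Rmin_pos; lra. apply Rdiv_lt_0_compat; lra. }
  set (B := fun k => match k with 0%nat => padd (A 0%nat) (pscale t q)
                        | 1%nat => padd (A 1%nat) (pscale t q)
                        | 2%nat => A 2%nat | _ => A 3%nat end).
  set (c := cross (psub (A 1%nat) (A 0%nat)) (psub (A 3%nat) (A 0%nat))).
  assert (Hc : cross (psub (B 1%nat) (B 0%nat)) (psub (B 3%nat) (B 0%nat)) = c * (1 + t * e0)).
  { unfold B, c, q, p, w, cross, psub, padd, pscale; simpl. ring. }
  assert (Hc0 : 0 < Rabs c) by exact Harea.
  assert (Hte : 0 < t * e0) by (apply Rmult_lt_0_compat; lra).
  assert (HaB : par_area B = Rabs c * (1 + t * e0)).
  { unfold par_area. rewrite Hc, Rabs_mult. f_equal. apply Rabs_pos_eq. nra. }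
  assert (Hlt : par_area A < par_area B).
  { rewrite HaB. change (par_area A) with (Rabs c).
    assert (0 < Rabs c * (t * e0)) by (apply Rmult_lt_0_compat; lra). nra. }
  exists B. split; [|split; [|split]]; auto.
  - split; [|lra]. par_split HA. unfold B; apply pt_eq; unfold padd, pscale; simpl; lra.
  - intros k Hk. destruct k as [|[|[|[|k]]]]; simpl.
    + apply Hq; lra.
    + apply inP_convex; [apply HL; lia | exact Hpin | lra].
    + apply HL; lia.
    + apply HL; lia.
    + lia.
  - assert (Hs : Rabs (fst (pscale t q)) + Rabs (snd (pscale t q)) < delta).
    { unfold pscale; cbn [fst snd]. rewrite !Rabs_mult, (Rabs_pos_eq t) by lra.
      assert (t * M <= delta / 2).
      { apply (Rmult_le_compat_r M) in Ht2; [|lra].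
        replace (delta / (2 * M) * M) with (delta / 2) in Ht2 by (field; lra). lra. }
      unfold M in H1.
      assert (t * (Rabs (fst q) + Rabs (snd q) + 1) = t*Rabs(fst q) + t*Rabs(snd q) + t) by ring.
      lra. }
    intros k Hk. destruct k as [|[|[|[|k]]]]; simpl.
    + apply dist_small; auto.
    + apply dist_small; auto.
    + rewrite dist_self; lra.
    + rewrite dist_self; lra.
    + lia.
Qed.

Lemma part1 n v : convex_polygon n v ->
  forall A : nat -> point, locally_maximal n v A -> inscribed n v A.
Proof.
  intros hP A [HP [HL [delta [Hd Hmax]]]] k Hk.
  destruct (classic (on_boundary n v (A k))) as [|Hnb]; auto. exfalso.
  assert (Hint : forall i, (i < n)%nat -> 0 < cl n v i (A k)).
  { intros i Hi. apply interior; auto. }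
  assert (G : Good n v A delta).
  { destruct k as [|[|[|[|k]]]].
    - apply core1; auto.
    - apply Good_rot; auto. apply core1; auto using par_rot, lies_rot.
    - apply Good_rot; auto. apply Good_rot; auto using par_rot.
      apply core1; auto using par_rot, lies_rot.
    - apply Good_rot; auto. apply Good_rot; auto using par_rot.
      apply Good_rot; auto using par_rot.
      apply core1; auto using par_rot, lies_rot.
    - lia. }
  destruct G as [B [HB [HLB [HdB Ha]]]].
  specialize (Hmax B HB HLB HdB). lra.
Qed.

Lemma heights n v F i : convex_polygon n v -> (i < n)%nat -> parallelogram F ->
  cl n v i (F 0%nat) = 0 -> cl n v i (F 1%nat) = 0 ->
  cl n v i (F 2%nat) <> 0 /\ cl n v i (F 3%nat) <> 0.
Proof.
  intros hP Hi [H Ha] Z0 Z1. par_split H.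
  pose proof (edge_nz n v i hP Hi) as N.
  assert (K3 : cl n v i (F 3%nat) <> 0).
  { intro Z3.
    assert (Z : cross (psub (F 1%nat) (F 0%nat)) (psub (F 3%nat) (F 0%nat)) = 0).
    { unfold cross, psub; cbn [fst snd].
      apply (par_lemma (fst (v (nxt n i)) - fst (v i)) (snd (v (nxt n i)) - snd (v i))).
      - exact N.
      - transitivity (cl n v i (F 1%nat) - cl n v i (F 0%nat));
          [unfold cl, cross, psub; cbn [fst snd]; ring | lra].
      - transitivity (cl n v i (F 3%nat) - cl n v i (F 0%nat));
          [unfold cl, cross, psub; cbn [fst snd]; ring | lra]. }
    unfold par_area in Ha. rewrite Z, Rabs_R0 in Ha. lra. }
  split; auto.
  assert (E : cl n v i (F 2%nat) = cl n v i (F 1%nat) + cl n v i (F 3%nat) - cl n v i (F 0%nat)).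
  { unfold cl, cross, psub; cbn [fst snd].
    assert (E1 : fst (F 2%nat) = fst (F 1%nat) + fst (F 3%nat) - fst (F 0%nat)) by lra.
    assert (E2 : snd (F 2%nat) = snd (F 1%nat) + snd (F 3%nat) - snd (F 0%nat)) by lra.
    rewrite E1, E2. ring. }
  rewrite E, Z0, Z1. lra.
Qed.

Lemma cl_vert n v i : cl n v i (v i) = 0.
Proof. unfold cl, cross, psub; cbn [fst snd]; ring. Qed.

Lemma diag n v A i : convex_polygon n v -> (i < n)%nat -> parallelogram A -> lies_in n v A ->
  in_edge n v i (A 0%nat) -> in_edge n v i (A 2%nat) -> False.
Proof.
  intros hP Hi HP HL E0 E2.
  apply in_edge_line in E0. apply in_edge_line in E2.
  assert (P1 := HL 1%nat ltac:(lia) i Hi). assert (P3 := HL 3%nat ltac:(lia) i Hi).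
  fold (cl n v i (A 1%nat)) in P1. fold (cl n v i (A 3%nat)) in P3.
  pose proof HP as [H _]. par_split H.
  assert (E : cl n v i (A 1%nat) + cl n v i (A 3%nat) = cl n v i (A 0%nat) + cl n v i (A 2%nat)).
  { unfold cl, cross, psub; cbn [fst snd].
    assert (E1 : fst (A 2%nat) = fst (A 1%nat) + fst (A 3%nat) - fst (A 0%nat)) by lra.
    assert (E3 : snd (A 2%nat) = snd (A 1%nat) + snd (A 3%nat) - snd (A 0%nat)) by lra.
    rewrite E1, E3. ring. }
  destruct (heights n v (rot A) i hP Hi (par_rot A HP)) as [_ K]; simpl; try lra.
  apply K. simpl. lra.
Qed.

Lemma slide n v A i : convex_polygon n v -> (i < n)%nat -> parallelogram A -> lies_in n v A ->
  inscribed n v A -> in_edge n v i (A 0%nat) -> in_edge n v i (A 1%nat) ->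
  exists B, parallelogram B /\ lies_in n v B /\ inscribed n v B /\ par_area B = par_area A /\
    B 2%nat = A 2%nat /\ B 3%nat = A 3%nat /\
    ((B 0%nat = v i /\ in_edge n v i (B 1%nat)) \/ (B 1%nat = v i /\ in_edge n v i (B 0%nat))).
Proof.
  intros hP Hi [H Harea] HL HI [a [Ha HA0]] [b [Hb HA1]].
  assert (Hi' := nxt_lt n i Hi).
  par_split H. rewrite HA0, HA1 in Hx, Hy. unfold pscale, psub in Hx, Hy; simpl in Hx, Hy.
  set (e := psub (v (nxt n i)) (v i)) in *.
  destruct (Req_dec a b) as [Eab|Nab].
  { exfalso. unfold par_area in Harea. rewrite HA0, HA1, Eab in Harea.
    unfold cross, psub, padd, pscale in Harea; cbn [fst snd] in Harea.
    match type of Harea with 0 < Rabs ?X => replace X with 0 in Harea by ring end.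
    rewrite Rabs_R0 in Harea. lra. }
  destruct (Rlt_dec a b) as [Lab|Lab].
  - exists (fun k => match k with 0%nat => v i | 1%nat => padd (v i) (pscale (b - a) e)
                   | 2%nat => A 2%nat | _ => A 3%nat end).
    assert (Ed : in_edge n v i (padd (v i) (pscale (b - a) e))) by (exists (b - a); split; [lra|reflexivity]).
    split; [|split; [|split; [|split; [|split; [|split]]]]]; auto.
    + split.
      * apply pt_eq; unfold padd, pscale, e, psub; cbn [fst snd]; lra.
      * unfold par_area in *. rewrite HA0, HA1 in Harea.
        match type of Harea with 0 < Rabs ?X => replace X with
          (cross (psub (padd (v i) (pscale (b - a) e)) (v i)) (psub (A 3%nat) (v i))) in Harea end.
        exact Harea. unfold e, cross, psub, padd, pscale; cbn [fst snd]; ring.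
    + intros k Hk. destruct k as [|[|[|[|k]]]]; simpl.
      * apply vert_in; auto.
      * apply (edge_in n v i); auto.
      * apply HL; lia.
      * apply HL; lia.
      * lia.
    + intros k Hk. destruct k as [|[|[|[|k]]]]; simpl.
      * left. exists i. auto.
      * right. exists i. auto.
      * apply HI; lia.
      * apply HI; lia.
      * lia.
    + unfold par_area. rewrite HA0, HA1. f_equal.
      unfold e, cross, psub, padd, pscale; cbn [fst snd]; ring.
  - assert (Lba : b < a) by lra.
    exists (fun k => match k with 0%nat => padd (v i) (pscale (a - b) e) | 1%nat => v i
                   | 2%nat => A 2%nat | _ => A 3%nat end).
    assert (Ed : in_edge n v i (padd (v i) (pscale (a - b) e))) by (exists (a - b); split; [lra|reflexivity]).
    split; [|split; [|split; [|split; [|split; [|split]]]]]; auto.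
    + split.
      * apply pt_eq; unfold padd, pscale, e, psub; cbn [fst snd]; lra.
      * unfold par_area in *. rewrite HA0, HA1 in Harea.
        match type of Harea with 0 < Rabs ?X => replace X with
          (cross (psub (v i) (padd (v i) (pscale (a - b) e)))
                 (psub (A 3%nat) (padd (v i) (pscale (a - b) e)))) in Harea end.
        exact Harea.
        unfold e, cross, psub, padd, pscale; cbn [fst snd]; ring.
    + intros k Hk. destruct k as [|[|[|[|k]]]]; simpl.
      * apply (edge_in n v i); auto.
      * apply vert_in; auto.
      * apply HL; lia.
      * apply HL; lia.
      * lia.
    + intros k Hk. destruct k as [|[|[|[|k]]]]; simpl.
      * right. exists i. auto.
      * left. exists i. auto.
      * apply HI; lia.
      * apply HI; lia.
      * lia.
    + unfold par_area. rewrite HA0, HA1. f_equal.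
      unfold e, cross, psub, padd, pscale; cbn [fst snd]; ring.
Qed.

Lemma bt n v i m x y : convex_polygon n v -> (i < n)%nat -> (m < n)%nat ->
  in_edge n v i x -> in_edge n v m x -> in_edge n v m y -> cl n v i y <> 0 -> False.
Proof.
  intros hP Hi Hm E1 E2 E3 K.
  assert (i = m) by (apply (edge_disj n v i m x); auto). subst.
  apply in_edge_line in E3. auto.
Qed.

Lemma NS n v F i : convex_polygon n v -> (i < n)%nat -> parallelogram F ->
  ((F 0%nat = v i /\ in_edge n v i (F 1%nat)) \/ (F 1%nat = v i /\ in_edge n v i (F 0%nat))) ->
  ~ (exists j, (j < n)%nat /\ in_edge n v j (F 2%nat) /\ in_edge n v j (F 3%nat)) ->
  ~ slidable n v F.
Proof.
  intros hP Hi HF Hb Htop [m [p [q [Hm [Hp [Hq [Hpq [Ep Eq]]]]]]]].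
  assert (Z : cl n v i (F 0%nat) = 0 /\ cl n v i (F 1%nat) = 0).
  { destruct Hb as [[V E]|[V E]]; rewrite V; split; try apply cl_vert; apply in_edge_line; auto. }
  destruct Z as [Z0 Z1].
  destruct (heights n v F i hP Hi HF Z0 Z1) as [K2 K3].
  destruct Hb as [[V E]|[V E]];
  destruct p as [|[|[|[|p]]]]; destruct q as [|[|[|[|q]]]]; try lia;
  first
  [ rewrite V in Ep; exact (vert_not_edge n v i m hP Hi Hm Ep)
  | rewrite V in Eq; exact (vert_not_edge n v i m hP Hi Hm Eq)
  | solve [apply Htop; exists m; auto]
  | exact (bt n v i m _ _ hP Hi Hm E Ep Eq K2)
  | exact (bt n v i m _ _ hP Hi Hm E Ep Eq K3)
  | exact (bt n v i m _ _ hP Hi Hm E Eq Ep K2)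
  | exact (bt n v i m _ _ hP Hi Hm E Eq Ep K3) ].
Qed.

Definition Goal2 n v (A : nat -> point) : Prop :=
  exists B : nat -> point,
       parallelogram B /\ lies_in n v B /\ inscribed n v B /\
       ~ slidable n v B /\ par_area B = par_area A.

Lemma Goal2_rot n v A : parallelogram A -> Goal2 n v (rot A) -> Goal2 n v A.
Proof.
  intros [H _] [B [h1 [h2 [h3 [h4 h5]]]]]. exists B. split; [|split; [|split; [|split]]]; auto.
  rewrite h5. apply area_eq_rot; auto.
Qed.

Lemma core2 n v A i : convex_polygon n v -> (i < n)%nat -> parallelogram A -> lies_in n v A ->
  inscribed n v A -> in_edge n v i (A 0%nat) -> in_edge n v i (A 1%nat) -> Goal2 n v A.
Proof.
  intros hP Hi HP HL HI E0 E1.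
  destruct (slide n v A i hP Hi HP HL HI E0 E1) as [B [HB [HLB [HIB [HaB [B2 [B3 Hb]]]]]]].
  destruct (classic (exists j, (j < n)%nat /\ in_edge n v j (A 2%nat) /\ in_edge n v j (A 3%nat)))
    as [[j [Hj [E2 E3]]]|Hn].
  - set (X := rot (rot B)).
    assert (X0 : in_edge n v j (X 0%nat)) by (simpl; rewrite B2; exact E2).
    assert (X1 : in_edge n v j (X 1%nat)) by (simpl; rewrite B3; exact E3).
    assert (HX : parallelogram X) by (apply par_rot, par_rot; auto).
    destruct (slide n v X j hP Hj HX (lies_rot _ _ _ (lies_rot _ _ _ HLB))
                (insc_rot _ _ _ (insc_rot _ _ _ HIB)) X0 X1)
      as [C [HC [HLC [HIC [HaC [C2 [C3 Hc]]]]]]].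
    exists (rot (rot C)). split; [|split; [|split; [|split]]].
    + apply par_rot, par_rot; auto.
    + apply lies_rot, lies_rot; auto.
    + apply insc_rot, insc_rot; auto.
    + apply (NS n v _ i hP Hi).
      * apply par_rot, par_rot; auto.
      * simpl. rewrite C2, C3. simpl. exact Hb.
      * simpl. intros [j' [Hj' [F2 F3]]].
        destruct Hc as [[V _]|[V _]].
        -- rewrite V in F2. exact (vert_not_edge n v j j' hP Hj Hj' F2).
        -- rewrite V in F3. exact (vert_not_edge n v j j' hP Hj Hj' F3).
    + pose proof (par_rot C HC) as [HC' _]. pose proof (par_rot B HB) as [HB1 _].
      destruct HC as [HC0 _]. destruct HB as [HB0 _].
      rewrite area_eq_rot by auto. rewrite area_eq_rot by auto. rewrite HaC.
      unfold X. rewrite area_eq_rot by auto. rewrite area_eq_rot by auto. auto.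
  - exists B. split; [|split; [|split; [|split]]]; auto.
    apply (NS n v B i hP Hi HB Hb). rewrite B2, B3. exact Hn.
Qed.

Lemma part2 n v : convex_polygon n v ->
  forall A : nat -> point,
     parallelogram A -> lies_in n v A -> inscribed n v A -> slidable n v A ->
     exists B : nat -> point,
       parallelogram B /\ lies_in n v B /\ inscribed n v B /\
       ~ slidable n v B /\ par_area B = par_area A.
Proof.
  intros hP A HP HL HI [i [j [k [Hi [Hj [Hk [Hjk [Ej Ek]]]]]]]].
  change (Goal2 n v A).
  assert (HP1 := par_rot A HP). assert (HP2 := par_rot _ HP1). assert (HP3 := par_rot _ HP2).
  assert (HL1 := lies_rot n v A HL). assert (HL2 := lies_rot n v _ HL1).
  assert (HL3 := lies_rot n v _ HL2).
  assert (HI1 := insc_rot n v A HI). assert (HI2 := insc_rot n v _ HI1).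
  assert (HI3 := insc_rot n v _ HI2).
  destruct j as [|[|[|[|j]]]]; destruct k as [|[|[|[|k]]]]; try lia.
  - apply (core2 n v A i); auto.
  - exfalso. apply (diag n v A i); auto.
  - apply Goal2_rot, Goal2_rot, Goal2_rot; auto. apply (core2 n v _ i); auto.
  - apply (core2 n v A i); auto.
  - apply Goal2_rot; auto. apply (core2 n v _ i); auto.
  - exfalso. apply (diag n v (rot A) i); auto.
  - exfalso. apply (diag n v A i); auto.
  - apply Goal2_rot; auto. apply (core2 n v _ i); auto.
  - apply Goal2_rot, Goal2_rot; auto. apply (core2 n v _ i); auto.
  - apply Goal2_rot, Goal2_rot, Goal2_rot; auto. apply (core2 n v _ i); auto.
  - exfalso. apply (diag n v (rot A) i); auto.
  - apply Goal2_rot, Goal2_rot; auto. apply (core2 n v _ i); auto.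
Qed.

Theorem lemma2 (n : nat) (v : nat -> point) (hP : convex_polygon n v) :
  (forall A : nat -> point, locally_maximal n v A -> inscribed n v A) /\
  (forall A : nat -> point,
     parallelogram A -> lies_in n v A -> inscribed n v A -> slidable n v A ->
     exists B : nat -> point,
       parallelogram B /\ lies_in n v B /\ inscribed n v B /\
       ~ slidable n v B /\ par_area B = par_area A).
Proof.
  split.
  - apply part1; auto.
  - apply part2; auto.
Qed.
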